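(* Let $\mathbb{A}=(A,\backslash,/)$ be a residuation algebra. If $\mathbb{A}$ satisfies $a\backslash(b\vee c)\leq(a\backslash b)\vee(a\backslash c)$ for all $a,b,c\in A$, then the dual structure $\mathbb{A}^\delta_+$ is functional, i.e. for all $y,z\in J^\infty(A^\delta)$, $y\cdot z\in J^\infty(A^\delta)\cup\{\bot\}$.
   Context: A residuation algebra is a structure $(A,\backslash,/)$ where $A$ is a bounded distributive lattice and $\backslash,/$ are binary operations on $A$ such that $\backslash$ preserves finite (including empty) meets in its second coordinate, $/$ preserves finite (including empty) meets in its first coordinate, and for all $a,b,c\in A$: $b\leq a\backslash c$ iff $a\leq c/b$. The canonical extension $A^\delta$ of $A$ is the complete lattice containing $A$ as a sublattice that is dense (every element is a join of meets and a meet of joins of elements of $A$) and compact (if $\bigwedge S\leq\bigvee T$ for $S,T\subseteq A$ then this holds for some finite subsets). Let $K(A^\delta)$ (resp. $O(A^\delta)$) be the set of meets (resp. joins) of subsets of $A$. The $\pi$-extension of $\backslash$ is defined by: for $k\in K(A^\delta)$, $o\in O(A^\delta)$, $k\backslash^\pi o=\bigvee\{a\backslash b\mid a,b\in A,\ k\leq a,\ b\leq o\}$, and for arbitrary $u,v\in A^\delta$, $u\backslash^\pi v=\bigwedge\{k\backslash^\pi o\mid k\in K(A^\delta),\ o\in O(A^\delta),\ k\leq u,\ v\leq o\}$; the $\pi$-extension $/^\pi$ of $/$ is defined symmetrically ($/$ being monotone in its first and antitone in its second coordinate). There is a binary operation $\cdot$ on $A^\delta$, completely join-preserving in each coordinate,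 such that for all $u,v,w\in A^\delta$: $v\leq u\backslash^\pi w$ iff $u\cdot v\leq w$ iff $u\leq w/^\pi v$. $J^\infty(A^\delta)$ is the set of completely join-irreducible elements of $A^\delta$ (those $x$ with $x=\bigvee S\Rightarrow x\in S$ for all $S\subseteq A^\delta$). The dual structure $\mathbb{A}^\delta_+$ is $(J^\infty(A^\delta),\geq,R)$ with $R(x,y,z)$ iff $x\leq y\cdot z$; it is called functional if $y\cdot z\in J^\infty(A^\delta)\cup\{\bot\}$ for all $y,z\in J^\infty(A^\delta)$. *)

(* Defs.v *)
From HB Require Import structures.
From mathcomp Require Import all_boot all_order.
Set Implicit Arguments. Unset Strict Implicit. Unset Printing Implicit Defensive.
Import Order.TTheory.
Local Open Scope order_scope.

Record CLat := {
  car :> Type;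
  cle : car -> car -> Prop;
  cle_refl : forall x, cle x x;
  cle_trans : forall x y z, cle x y -> cle y z -> cle x z;
  cle_anti : forall x y, cle x y -> cle y x -> x = y;
  csup : (car -> Prop) -> car;
  csup_ub : forall (S : car -> Prop) x, S x -> cle x (csup S);
  csup_least : forall (S : car -> Prop) y, (forall x, S x -> cle x y) -> cle (csup S) y;
  cinf : (car -> Prop) -> car;
  cinf_lb : forall (S : car -> Prop) x, S x -> cle (cinf S) x;
  cinf_greatest : forall (S : car -> Prop) y, (forall x, S x -> cle y x) -> cle y (cinf S)
}.

Section Defs.
Variables (d : Order.disp_t) (A : tbDistrLatticeType d).

Definition residuation_algebra (ldiv rdiv : A -> A -> A) : Prop :=
  [/\ (forall a b c, ldiv a (b `&` c) = ldiv a b `&` ldiv a c),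
      (forall a, ldiv a \top = \top),
      (forall a b c, rdiv (b `&` c) a = rdiv b a `&` rdiv c a),
      (forall a, rdiv \top a = \top) &
      (forall a b c, (b <= ldiv a c) <-> (a <= rdiv c b))].

Variable C : CLat.
Variable e : A -> C.

Definition img (S : A -> Prop) : C -> Prop := fun x => exists2 a, S a & x = e a.
Definition img_seq (s : seq A) : C -> Prop := fun x => exists2 a, a \in s & x = e a.

Definition closedK (k : C) : Prop := exists S : A -> Prop, k = cinf (img S).
Definition openO (o : C) : Prop := exists S : A -> Prop, o = csup (img S).

(* (C, e) is a canonical extension of A: e is an injective bounded lattice
   homomorphism (A is a bounded sublattice), dense and compact. *)
Definition canonical_extension : Prop :=
  injective e /\
  (forall a b, e (a `&` b) = cinf (fun x => x = e a \/ x = e b)) /\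
  (forall a b, e (a `|` b) = csup (fun x => x = e a \/ x = e b)) /\
  e \top = cinf (fun _ => False) /\
  e \bot = csup (fun _ => False) /\
  (forall u : C, (exists S : C -> Prop, (forall x, S x -> closedK x) /\ u = csup S) /\
                 (exists T : C -> Prop, (forall x, T x -> openO x) /\ u = cinf T)) /\
  (forall S T : A -> Prop, cle (cinf (img S)) (csup (img T)) ->
     exists s t : seq A, (forall a, a \in s -> S a) /\ (forall b, b \in t -> T b) /\
       cle (cinf (img_seq s)) (csup (img_seq t))).

(* pi-extension of \ (antitone in 1st, monotone in 2nd coordinate) *)
Definition ldivKO (ldiv : A -> A -> A) (k o : C) : C :=
  csup (fun x => exists a b, [/\ cle k (e a), cle (e b) o & x = e (ldiv a b)]).
Definition ldiv_pi (ldiv : A -> A -> A) (u v : C) : C :=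
  cinf (fun x => exists k o, [/\ closedK k, openO o, cle k u, cle v o & x = ldivKO ldiv k o]).

(* pi-extension of / (monotone in 1st, antitone in 2nd coordinate) *)
Definition rdivOK (rdiv : A -> A -> A) (o k : C) : C :=
  csup (fun x => exists b a, [/\ cle (e b) o, cle k (e a) & x = e (rdiv b a)]).
Definition rdiv_pi (rdiv : A -> A -> A) (u v : C) : C :=
  cinf (fun x => exists o k, [/\ openO o, closedK k, cle u o, cle k v & x = rdivOK rdiv o k]).

End Defs.

Definition cbot (C : CLat) : C := csup (fun _ : C => False).
Definition completely_join_irreducible (C : CLat) (x : C) : Prop :=
  forall S : C -> Prop, x = csup S -> S x.

(* Main.v *)
Require Import Defs.
From mathcomp Require Import all_boot all_order.
From Stdlib Require Import Classical.
Import Order.TTheory.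
Local Open Scope order_scope.

Definition isF {d} {A : tbDistrLatticeType d} (F : A -> Prop) :=
  [/\ F \top, (forall a b, F a -> F b -> F (a `&` b)) & (forall a b, a <= b -> F a -> F b)].

Lemma ce_mono {d} {A : tbDistrLatticeType d} {C : CLat} {e : A -> C} :
  canonical_extension e -> forall a b : A, a <= b -> cle (e a) (e b).
Proof.
move=> [Hinj [HI _]] a b ab.
have E : a `&` b = a by apply/meet_idPl.
rewrite -{1}E HI. apply: cinf_lb. by right.
Qed.

Lemma ce_refl {d} {A : tbDistrLatticeType d} {C : CLat} {e : A -> C} :
  canonical_extension e -> forall a b : A, cle (e a) (e b) -> a <= b.
Proof.
move=> [Hinj [HI _]] a b H. apply/meet_idPl. apply: Hinj. rewrite HI.
apply: cle_anti.
- apply: cinf_lb; by left.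
- apply: cinf_greatest => x [->|->]; [apply: cle_refl | exact H].
Qed.

Lemma ce_join_bound {d} {A : tbDistrLatticeType d} {C : CLat} {e : A -> C} :
  canonical_extension e -> forall (t : seq A) u,
  (forall b, b \in t -> cle (e b) u) -> cle (e (\join_(b <- t) b)) u.
Proof.
move=> [Hinj [HI [HU [HT [HB _]]]]] t u; elim: t => [|b t IH] H.
- rewrite big_nil HB. by apply: csup_least => x [].
- rewrite big_cons HU. apply: csup_least => x [->|->].
  + apply: H; by rewrite inE eqxx.
  + apply: IH => c ct; apply: H; by rewrite inE ct orbT.
Qed.

Lemma meet_le {d} {A : tbDistrLatticeType d} (s : seq A) a :
  a \in s -> \meet_(x <- s) x <= a.
Proof.
elim: s => [|b s IH] //; rewrite inE big_cons => /orP [/eqP ->|H].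
- exact: leIl.
- apply: le_trans (leIr _ _) (IH H).
Qed.

Lemma join_ge {d} {A : tbDistrLatticeType d} (s : seq A) a :
  a \in s -> a <= \join_(x <- s) x.
Proof.
elim: s => [|b s IH] //; rewrite inE big_cons => /orP [/eqP ->|H].
- exact: leUl.
- apply: le_trans (IH H) (leUr _ _).
Qed.

Lemma meet_in {d} {A : tbDistrLatticeType d} (F : A -> Prop) (s : seq A) :
  isF F -> (forall x, x \in s -> F x) -> F (\meet_(x <- s) x).
Proof.
move=> [FT FI FU]; elim: s => [|b s IH] H; first by rewrite big_nil.
rewrite big_cons; apply: FI.
- apply: H; by rewrite inE eqxx.
- apply: IH => c cs; apply: H; by rewrite inE cs orbT.
Qed.

Lemma compactF {d} {A : tbDistrLatticeType d} {C : CLat} {e : A -> C} (F I : A -> Prop) :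
  canonical_extension e -> isF F -> cle (cinf (img e F)) (csup (img e I)) ->
  exists f t, [/\ F f, (forall b, b \in t -> I b) & f <= \join_(b <- t) b].
Proof.
move=> CE HF H.
have CE' := CE; case: CE' => [_ [_ [_ [_ [_ [_ Hc]]]]]].
case: (Hc _ _ H) => s [t [Hs [Ht Hst]]].
exists (\meet_(x <- s) x), t; split => //.
- exact: meet_in.
- apply: (ce_refl CE). apply: cle_trans (cle_trans _ Hst) _.
  + apply: cinf_greatest => x [a ains ->]. apply: (ce_mono CE). exact: meet_le.
  + apply: csup_least => x [a ains ->]. apply: (ce_mono CE). exact: join_ge.
Qed.

Lemma prime_seq {d} {A : tbDistrLatticeType d} (F : A -> Prop) (t : seq A) :
  (forall a b, F (a `|` b) -> F a \/ F b) -> ~ F \bot ->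
  F (\join_(b <- t) b) -> exists2 b, b \in t & F b.
Proof.
move=> Hp Hb; elim: t => [|b t IH]; first by rewrite big_nil.
rewrite big_cons => /Hp [H|H].
- exists b => //; by rewrite inE eqxx.
- case: (IH H) => c ct Fc; exists c => //; by rewrite inE ct orbT.
Qed.

Definition Fof {d} {A : tbDistrLatticeType d} {C : CLat} (e : A -> C) (y : C) : A -> Prop :=
  fun a => cle y (e a).

Lemma cji_closed {d} {A : tbDistrLatticeType d} {C : CLat} {e : A -> C} (y : C) :
  canonical_extension e -> completely_join_irreducible y ->
  y = cinf (img e (Fof e y)).
Proof.
move=> CE Hy. have CE' := CE; case: CE' => [_ [_ [_ [_ [_ [Hd _]]]]]].
case: (Hd y) => [[S [HS Ey]] _].
case: (HS _ (Hy _ Ey)) => S0 E0.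
apply: cle_anti.
- apply: cinf_greatest => x [a Ha ->]. exact: Ha.
- rewrite {2}E0. apply: cinf_greatest => x [a Ha ->]. apply: cinf_lb.
  exists a => //. rewrite /Fof {1}E0. apply: cinf_lb. by exists a.
Qed.

Lemma cji_F {d} {A : tbDistrLatticeType d} {C : CLat} {e : A -> C} (y : C) :
  canonical_extension e -> isF (Fof e y).
Proof.
move=> CE. have CE' := CE; case: CE' => [_ [HI [_ [HT _]]]].
split.
- rewrite /Fof HT. by apply: cinf_greatest.
- move=> a b Ha Hb. rewrite /Fof HI. by apply: cinf_greatest => x [->|->].
- move=> a b ab Ha. apply: cle_trans Ha _. exact: ce_mono.
Qed.

Lemma cji_notbot {d} {A : tbDistrLatticeType d} {C : CLat} {e : A -> C} (y : C) :
  canonical_extension e -> completely_join_irreducible y -> ~ Fof e y \bot.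
Proof.
move=> CE Hy H. have CE' := CE; case: CE' => [_ [_ [_ [_ [HB _]]]]].
rewrite /Fof HB in H.
have E : y = csup (fun _ : C => False).
  apply: cle_anti => //. by apply: csup_least => x [].
exact: (Hy _ E).
Qed.

Lemma cji_prime {d} {A : tbDistrLatticeType d} {C : CLat} {e : A -> C} (z : C) :
  canonical_extension e -> completely_join_irreducible z ->
  forall c1 c2, Fof e z (c1 `|` c2) -> Fof e z c1 \/ Fof e z c2.
Proof.
move=> CE Hz c1 c2 H12.
have Ez := cji_closed z CE Hz.
have [FT FI FU] := cji_F z CE.
set F := Fof e z in Ez FT FI FU H12 *.
have CE' := CE; case: CE' => [_ [_ [_ [_ [_ [Hd _]]]]]].
pose S c := fun a => exists2 f, F f & f `&` c <= a.
have SF : forall c, isF (S c).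
  move=> c; split.
  - exists \top => //; exact: leIl.
  - move=> a b [f Hf fa] [g Hg gb]; exists (f `&` g); first exact: FI.
    rewrite lexI; apply/andP; split.
    + apply: le_trans fa. rewrite lexI leIr andbT. apply: le_trans (leIl _ _) (leIl _ _).
    + apply: le_trans gb. rewrite lexI leIr andbT. apply: le_trans (leIl _ _) (leIr _ _).
  - move=> a b ab [f Hf fa]; exists f => //; exact: le_trans ab.
pose z1 := cinf (img e (S c1)). pose z2 := cinf (img e (S c2)).
have zi_le : forall c, cle (cinf (img e (S c))) z.
  move=> c. rewrite [X in cle _ X]Ez. apply: cinf_greatest => x [a Ha ->].
  apply: cinf_lb; exists a => //; exists a => //; exact: leIl.
have Ez12 : z = csup (fun x => x = z1 \/ x = z2).
  apply: cle_anti; last by apply: csup_least => x [->|->]; apply: zi_le.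
  case: (Hd (csup (fun x => x = z1 \/ x = z2))) => _ [T [HT ET]].
  rewrite ET; apply: cinf_greatest => t Tt.
  have zt : forall x, x = z1 \/ x = z2 -> cle x t.
    move=> x Hx. apply: cle_trans (@csup_ub _ (fun x => x = z1 \/ x = z2) x Hx) _. rewrite ET. exact: cinf_lb.
  case: (HT _ Tt) => I EI.
  have := zt _ (or_introl erefl); rewrite EI => /(compactF _ _ CE (SF c1)) [f1 [t1 [[g1 Hg1 g1f] Ht1 f1t]]].
  have := zt _ (or_intror erefl); rewrite EI => /(compactF _ _ CE (SF c2)) [f2 [t2 [[g2 Hg2 g2f] Ht2 f2t]]].
  set g := g1 `&` g2 `&` (c1 `|` c2).
  have Fg : F g := FI _ _ (FI _ _ Hg1 Hg2) H12.
  have gg1 : g <= g1 := le_trans (leIl _ _) (leIl _ _).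
  have gg2 : g <= g2 := le_trans (leIl _ _) (leIr _ _).
  have gle : g <= \join_(b <- t1 ++ t2) b.
    rewrite big_cat /=.
    have -> : g = (g `&` c1) `|` (g `&` c2).
      by rewrite -meetUr; apply/esym/meet_idPl; rewrite /g leIr.
    rewrite leUx; apply/andP; split.
    + apply: le_trans (leUl _ _). apply: le_trans f1t. apply: le_trans g1f.
      rewrite lexI leIr andbT. exact: le_trans (leIl _ _) gg1.
    + apply: le_trans (leUr _ _). apply: le_trans f2t. apply: le_trans g2f.
      rewrite lexI leIr andbT. exact: le_trans (leIl _ _) gg2.
  apply: cle_trans Fg _. apply: cle_trans (ce_mono CE _ _ gle) _.
  apply: (ce_join_bound CE) => b bt. apply: csup_ub. exists b => //.
  move: bt; rewrite mem_cat => /orP [H|H]; [exact: Ht1 | exact: Ht2].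
case: (Hz _ Ez12) => E; [left|right]; rewrite /F /Fof E; apply: cinf_lb.
- exists c1 => //; exists \top => //; exact: leIr.
- exists c2 => //; exists \top => //; exact: leIr.
Qed.

Lemma cji_P {d} {A : tbDistrLatticeType d} {C : CLat} {e : A -> C} (z : C) :
  canonical_extension e -> completely_join_irreducible z ->
  forall T, cle z (csup (img e T)) -> exists2 c, T c & Fof e z c.
Proof.
move=> CE Hz T H.
have Ez := cji_closed z CE Hz.
have HF := cji_F z CE.
have H' : cle (cinf (img e (Fof e z))) (csup (img e T)) by rewrite -Ez.
case: (compactF _ _ CE HF H') => f [t [Ff Ht ft]].
case: HF => _ _ FU.
have := FU _ _ ft Ff.
case/(prime_seq _ _ (cji_prime z CE Hz) (cji_notbot z CE Hz)) => c ct Fc.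
by exists c => //; apply: Ht.
Qed.

Theorem proposition2p5 (d : Order.disp_t) (A : tbDistrLatticeType d)
    (ldiv rdiv : A -> A -> A) (C : CLat) (e : A -> C) (dot : C -> C -> C) :
  residuation_algebra ldiv rdiv ->
  canonical_extension e ->
  (forall u v w : C,
     (cle v (ldiv_pi e ldiv u w) <-> cle (dot u v) w) /\
     (cle (dot u v) w <-> cle u (rdiv_pi e rdiv w v))) ->
  (forall a b c : A, ldiv a (b `|` c) <= ldiv a b `|` ldiv a c) ->
  forall y z : C,
    completely_join_irreducible y -> completely_join_irreducible z ->
    completely_join_irreducible (dot y z) \/ dot y z = cbot C.
Proof.
move=> [Hm Ht _ _ Hres] CE Hadj Hdist y z Hy Hz.
have ldiv_mono2 : forall a b b', b <= b' -> ldiv a b <= ldiv a b'.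
  move=> a b b' bb. have E : b `&` b' = b by apply/meet_idPl.
  rewrite -E Hm. exact: leIr.
have ldiv_anti1 : forall a a' c, a' <= a -> ldiv a c <= ldiv a' c.
  move=> a a' c aa. apply/Hres. apply: le_trans aa _. apply/Hres. exact: lexx.
have Ey := cji_closed y CE Hy.
have [FyT FyI FyU] := cji_F y CE.
have [FzT FzI FzU] := cji_F z CE.
have CE' := CE; case: CE' => [_ [_ [_ [_ [HB _]]]]].
set m := dot y z.
pose G b := exists2 a, Fof e y a & Fof e z (ldiv a b).
pose Q o := exists2 b, G b & cle (e b) o.
have char : forall w, cle m w <-> (forall o, openO e o -> cle w o -> Q o).
  move=> w; split.
  - move=> H o Oo wo.
    have Hz' : cle z (ldiv_pi e ldiv y w) by apply/(proj1 (Hadj y z w)).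
    have Hzo : cle z (ldivKO e ldiv y o).
      apply: cle_trans Hz' _. apply: cinf_lb. exists y, o; split => //.
      + by exists (Fof e y).
      + exact: cle_refl.
    pose T c := exists a b, [/\ Fof e y a, cle (e b) o & c = ldiv a b].
    have : cle z (csup (img e T)).
      apply: cle_trans Hzo _. apply: csup_least => x [a [b [ya bo ->]]].
      apply: csup_ub. exists (ldiv a b) => //. by exists a, b.
    case/(cji_P z CE Hz) => c [a [b [ya bo ->]]] zc.
    exists b => //. by exists a.
  - move=> H. apply/(proj1 (Hadj y z w)).
    apply: cinf_greatest => x [k [o [Kk Oo ky wo ->]]].
    case: (H o Oo wo) => b [a ya zab] bo.
    apply: cle_trans zab _. apply: csup_ub. exists a, b; split => //.
    exact: cle_trans ky ya.
have GF : isF G.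
  split.
  - exists \top => //. rewrite Ht. exact: FzT.
  - move=> b1 b2 [a1 ya1 z1] [a2 ya2 z2]. exists (a1 `&` a2); first exact: FyI.
    rewrite Hm. apply: FzI.
    + apply: FzU z1. apply: ldiv_anti1. exact: leIl.
    + apply: FzU z2. apply: ldiv_anti1. exact: leIr.
  - move=> b b' bb [a ya za]. exists a => //. apply: FzU za. exact: ldiv_mono2.
have Gp : forall b1 b2, G (b1 `|` b2) -> G b1 \/ G b2.
  move=> b1 b2 [a ya za].
  have := FzU _ _ (Hdist a b1 b2) za.
  case/(cji_prime z CE Hz) => H; [left|right]; by exists a.
case: (classic (m = cbot C)) => [->|Hm0]; [by right | left].
have Gnb : ~ G \bot.
  move=> Gb. apply: Hm0.
  have : cle m (e \bot).
    apply/(proj2 (char _)) => o Oo bo. by exists \bot.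
  rewrite HB => mb. apply: cle_anti => //. by apply: csup_least => x [].
move=> S HS.
have mS : cle m (csup S) by rewrite -HS; apply: cle_refl.
have [s Ss ms] : exists2 s, S s & cle m s.
  apply: NNPP => Hno.
  pose J c := exists s o, [/\ S s, openO e o, cle s o, ~ Q o & cle (e c) o].
  have HJ : Q (csup (img e J)).
    apply: (proj1 (char _) mS); first by exists J.
    apply: csup_least => s Ss.
    have nms : ~ cle m s by move=> ms; apply: Hno; exists s.
    have [o [Oo so nQ]] : exists o, [/\ openO e o, cle s o & ~ Q o].
      apply: NNPP => H'. apply: nms; apply/(proj2 (char s)) => o Oo so.
      apply: NNPP => nQ. apply: H'; by exists o.
    eapply cle_trans; first exact so. case: (Oo) => I EI.
    rewrite {1}EI. apply: csup_least => x [c Ic ->]. apply: csup_ub.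
    exists c => //. exists s, o; split => //.
    rewrite EI; apply: csup_ub; by exists c.
  case: HJ => b Gb bJ.
  have Fb : isF (fun x => b <= x).
    split.
    - exact: lex1.
    - move=> a a' ba ba'. by rewrite lexI ba ba'.
    - move=> a a' aa ba. exact: le_trans aa.
  have Hc : cle (cinf (img e (fun x => b <= x))) (csup (img e J)).
    apply: cle_trans _ bJ. apply: cinf_lb. by exists b.
  case: (compactF _ _ CE Fb Hc) => f [t [bf HtJ ft]].
  case: GF => _ _ GU.
  have Gt := GU _ _ (le_trans bf ft) Gb.
  case: (prime_seq _ _ Gp Gnb Gt) => c ct Gc.
  case: (HtJ c ct) => s' [o [Ss' Oo so' nQ co]].
  apply: nQ; by exists c.
have E : m = s.
  apply: cle_anti => //. rewrite HS. exact: csup_ub.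
by rewrite E.
Qed.
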